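(* Let $k$ be a field of characteristic $p\ge0$ which is a finitely generated field extension of a perfect field, with algebraic closure $\overline k$. Let $X=(x_1,\dots,x_n)$ and let $\sigma=\sum_{I\in\mathbb N^n}\alpha_IX^I\in\overline k[[X]]$ with $\alpha_I\in\overline k$, and let $L=k(\{\alpha_I\mid I\in\mathbb N^n\})$. Then $\sigma$ is algebraic over $k((X))$ (the fraction field of $k[[X]]$) if and only if $[L:k]<\infty$. *)

(* Defs.v *)
From HB Require Import structures.
From mathcomp Require Import all_boot all_order all_algebra.
Set Implicit Arguments. Unset Strict Implicit. Unset Printing Implicit Defensive.
Import Order.TTheory GRing.Theory Num.Theory.
Local Open Scope ring_scope.

Section Defs.
Variable K : fieldType.

Definition is_subfield (S : K -> Prop) : Prop :=
  [/\ S 0, S 1,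
      (forall x y, S x -> S y -> S (x - y) /\ S (x * y))
    & (forall x, S x -> S x^-1)].

Definition gen_field (F A : K -> Prop) : K -> Prop :=
  fun x => forall S, is_subfield S -> (forall y, F y -> S y) ->
                     (forall y, A y -> S y) -> S x.

(* perfect: in characteristic p > 0 the Frobenius is surjective;
   characteristic 0 fields are perfect (the condition is then vacuous). *)
Definition perfect_subfield (F : K -> Prop) : Prop :=
  forall p : nat, p \in [pchar K] -> forall x, F x -> exists2 y, F y & y ^+ p = x.

Definition fg_over_perfect (k : K -> Prop) : Prop :=
  exists F0 : K -> Prop,
    [/\ is_subfield F0, perfect_subfield F0, (forall x, F0 x -> k x)
      & exists s : seq K, forall x, k x <-> gen_field F0 (fun y => y \in s) x].

Definition algebraic_over (k : K -> Prop) (x : K) : Prop :=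
  exists2 p : {poly K}, p != 0 & (forall i, k p`_i) /\ root p x.

Definition finite_degree (k L : K -> Prop) : Prop :=
  exists s : seq K, forall x, L x ->
    exists2 c : nat -> K, (forall i, k (c i)) & x = \sum_(i < size s) c i * s`_i.

Definition mindex (n : nat) := {ffun 'I_n -> nat}.
Definition pseries (n : nat) := mindex n -> K.

Definition mbound n (I : mindex n) := (\sum_(i < n) I i).+1.

Definition ps_mul n (f g : pseries n) : pseries n := fun I =>
  \sum_(J : {ffun 'I_n -> 'I_(mbound I)} | [forall i, (J i <= I i)%N])
     f [ffun i => nat_of_ord (J i)] * g [ffun i => (I i - J i)%N].

Definition ps_one n : pseries n := fun I => if I == [ffun => 0%N] then 1 else 0.

Fixpoint ps_exp n (f : pseries n) (j : nat) : pseries n :=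
  if j is j'.+1 then ps_mul f (ps_exp f j') else @ps_one n.

Definition ps_peval n (a : nat -> pseries n) (d : nat) (sigma : pseries n) : pseries n :=
  fun I => \sum_(j < d.+1) ps_mul (a j) (ps_exp sigma j) I.

(* sigma in kbar[[X]] is algebraic over k((X)) = Frac(k[[X]]): it is a root of a
   nonzero polynomial with coefficients in k[[X]] (denominators cleared). *)
Definition ps_algebraic n (k : K -> Prop) (sigma : pseries n) : Prop :=
  exists d (a : nat -> pseries n),
    [/\ forall j I, k (a j I),
        exists2 j, (j <= d)%N & exists I, a j I != 0
      & forall I, ps_peval a d sigma I = 0].

End Defs.

(* Main.v *)
Require Import Defs.
From HB Require Import structures.
From mathcomp Require Import all_boot all_order all_algebra.
From mathcomp Require Import boolp zify ring.
Set Implicit Arguments. Unset Strict Implicit. Unset Printing Implicit Defensive.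
Import Order.TTheory GRing.Theory Num.Theory.
Local Open Scope ring_scope.

Section Mindex.
Variable n : nat.
Local Notation M := (mindex n).
HB.instance Definition _ := Countable.copy M {ffun 'I_n -> nat}.

Lemma uniq_permM (s t : seq M) : uniq s -> uniq t ->
  (forall x : M, (x \in s) = (x \in t)) -> perm_eq s t.
Proof. by move=> *; apply: uniq_perm. Qed.

Lemma mem_filterM (p : pred M) (x : M) s : (x \in filter p s) = p x && (x \in s).
Proof. exact: mem_filter. Qed.

Definition madd (I J : M) : M := [ffun i => (I i + J i)%N].
Definition msub (I J : M) : M := [ffun i => (I i - J i)%N].
Definition mle (J I : M) : bool := [forall i, (J i <= I i)%N].
Definition m0 : M := [ffun => 0%N].

Definition ffnat b (J : {ffun 'I_n -> 'I_b}) : M := [ffun i => nat_of_ord (J i)].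
Definition box b : seq M := map (@ffnat b) (enum {ffun 'I_n -> 'I_b}).
Definition dvs (I : M) := [seq J <- box (mbound I) | mle J I].

Lemma ffnat_inj b : injective (@ffnat b).
Proof.
move=> J J' /ffunP H; apply/ffunP=> i; apply/val_inj.
by have := H i; rewrite !ffunE.
Qed.

Lemma box_uniq b : uniq (box b).
Proof. by rewrite map_inj_uniq ?enum_uniq //; apply: ffnat_inj. Qed.

Lemma mem_box b (K : M) : (K \in box b) = [forall i, (K i < b)%N].
Proof.
apply/mapP/forallP => [[J _ ->] i|H].
  by rewrite ffunE.
exists [ffun i => Ordinal (H i)]; first by rewrite mem_enum.
by apply/ffunP=> i; rewrite !ffunE.
Qed.

Lemma le_mbound (I : M) i : (I i < mbound I)%N.
Proof.
rewrite /mbound ltnS (bigD1 i) //=; exact: leq_addr.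
Qed.

Lemma mem_dvs (I K : M) : (K \in dvs I) = mle K I.
Proof.
rewrite mem_filter mem_box andb_idr // => /forallP H.
by apply/forallP=> i; apply: leq_ltn_trans (H i) (le_mbound I i).
Qed.

Lemma dvs_uniq (I : M) : uniq (dvs I).
Proof. by rewrite filter_uniq // box_uniq. Qed.

Lemma mleP (J I : M) : reflect (forall i, (J i <= I i)%N) (mle J I).
Proof. exact: forallP. Qed.

Lemma msubK (I J : M) : mle J I -> msub I (msub I J) = J.
Proof. by move/mleP=> H; apply/ffunP=> i; rewrite !ffunE subKn. Qed.

Lemma maddC (I J : M) : madd I J = madd J I.
Proof. by apply/ffunP=> i; rewrite !ffunE addnC. Qed.

Lemma maddA (I J L : M) : madd I (madd J L) = madd (madd I J) L.
Proof. by apply/ffunP=> i; rewrite !ffunE addnA. Qed.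

Lemma madd0m (I : M) : madd m0 I = I.
Proof. by apply/ffunP=> i; rewrite !ffunE. Qed.

Lemma maddKm (I J : M) : msub (madd I J) I = J.
Proof. by apply/ffunP=> i; rewrite !ffunE addKn. Qed.

Lemma msubKm (I J : M) : mle J I -> madd J (msub I J) = I.
Proof. by move/mleP=> H; apply/ffunP=> i; rewrite !ffunE subnKC. Qed.

Lemma mle_addr (I J : M) : mle I (madd I J).
Proof. by apply/mleP=> i; rewrite ffunE leq_addr. Qed.

Lemma mle_subr (I J : M) : mle (msub I J) I.
Proof. by apply/mleP=> i; rewrite ffunE leq_subr. Qed.

Lemma mle_trans (I J L : M) : mle I J -> mle J L -> mle I L.
Proof. by move=> /mleP H1 /mleP H2; apply/mleP=> i; apply: leq_trans (H1 i) (H2 i). Qed.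

Lemma mle0 (I : M) : mle m0 I.
Proof. by apply/mleP=> i; rewrite ffunE. Qed.

Lemma mle_refl (I : M) : mle I I.
Proof. by apply/mleP. Qed.


Lemma dvs_perm_sub (I : M) : perm_eq (map (msub I) (dvs I)) (dvs I).
Proof.
apply: uniq_permM; last first.
- move=> x; apply/mapP/idP => [[J _ ->]|Hx]; first by rewrite mem_dvs mle_subr.
  by exists (msub I x); rewrite ?mem_dvs ?mle_subr // msubK // -mem_dvs.
- exact: dvs_uniq.
rewrite (map_inj_in_uniq) ?dvs_uniq // => x y.
by rewrite !mem_dvs => Hx Hy /(congr1 (msub I)); rewrite !msubK.
Qed.

Lemma dvs_sub (I J : M) : mle J I -> perm_eq (dvs J) [seq K <- dvs I | mle K J].
Proof.
move=> HJ; apply: uniq_permM; [exact: dvs_uniq|by rewrite filter_uniq // dvs_uniq|move=> x].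
rewrite mem_filterM !mem_dvs; apply/idP/andP => [H|[]//]; split=> //.
exact: mle_trans H HJ.
Qed.

Lemma dvs_shift (I L : M) : mle L I ->
  perm_eq (map (madd L) (dvs (msub I L))) [seq J <- dvs I | mle L J].
Proof.
move=> /mleP HL; apply: uniq_permM.
- rewrite map_inj_uniq ?dvs_uniq // => x y /(congr1 (msub^~ L)).
  by rewrite /= !maddKm.
- by rewrite filter_uniq // dvs_uniq.
move=> x; rewrite mem_filterM mem_dvs; apply/mapP/andP => [[J]|[]].
  rewrite mem_dvs => /mleP HJ ->; split; apply/mleP=> i; rewrite ffunE;
  by move: (HJ i) (HL i); rewrite ffunE; lia.
move=> /mleP H1 /mleP H2; exists (msub x L).
  by rewrite mem_dvs; apply/mleP=> i; rewrite !ffunE; move: (H1 i) (H2 i); lia.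
by apply/ffunP=> i; rewrite !ffunE subnKC.
Qed.

Lemma msub0 (I : M) : msub I m0 = I.
Proof. by apply/ffunP=> i; rewrite !ffunE subn0. Qed.

Lemma mem_dvs0 (I : M) : m0 \in dvs I.
Proof. by rewrite mem_dvs mle0. Qed.

Lemma mem_dvsI (I : M) : I \in dvs I.
Proof. by rewrite mem_dvs mle_refl. Qed.

End Mindex.

Section PSring.
Variable K : fieldType.
Variable n : nat.
Local Notation M := (mindex n).
Local Notation PS := (pseries K n).

Lemma ps_mulE (f g : PS) I :
  ps_mul f g I = \sum_(J <- dvs I) f J * g (msub I J).
Proof.
rewrite /ps_mul /dvs /box big_filter big_map big_enum_cond /=.
apply: eq_big => [J|J _]; first by rewrite /mle; apply: eq_forallb => i; rewrite ffunE.
by congr (_ * g _); apply/ffunP=> i; rewrite !ffunE.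
Qed.


Definition ps_add (f g : PS) : PS := fun I => f I + g I.
Definition ps_opp (f : PS) : PS := fun I => - f I.
Definition ps_zero : PS := fun _ => 0.

Lemma ps_addA : associative ps_add.
Proof. by move=> f g h; apply: funext => I; rewrite /ps_add addrA. Qed.
Lemma ps_addC : commutative ps_add.
Proof. by move=> f g; apply: funext => I; rewrite /ps_add addrC. Qed.
Lemma ps_add0 : left_id ps_zero ps_add.
Proof. by move=> f; apply: funext => I; rewrite /ps_add /ps_zero add0r. Qed.
Lemma ps_addN : left_inverse ps_zero ps_opp ps_add.
Proof. by move=> f; apply: funext => I; rewrite /ps_add /ps_zero /ps_opp addNr. Qed.

HB.instance Definition _ := gen_eqMixin PS.
HB.instance Definition _ := gen_choiceMixin PS.
HB.instance Definition _ := GRing.isZmodule.Build PS ps_addA ps_addC ps_add0 ps_addN.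

Lemma ps_mulC : commutative (@ps_mul K n).
Proof.
move=> f g; apply: funext => I; rewrite !ps_mulE -(perm_big _ (dvs_perm_sub I)) big_map.
apply: eq_big_seq => J; rewrite mem_dvs => HJ; rewrite msubK // mulrC //.
Qed.

Lemma ps_mulA : associative (@ps_mul K n).
Proof.
move=> f g h; apply: funext => I; rewrite !ps_mulE.
have E1 : \sum_(J <- dvs I) ps_mul f g J * h (msub I J) =
   \sum_(J <- dvs I) \sum_(L <- dvs I | mle L J) f L * g (msub J L) * h (msub I J).
  apply: eq_big_seq => J; rewrite mem_dvs => HJ.
  by rewrite ps_mulE (perm_big _ (dvs_sub HJ)) big_filter mulr_suml.
rewrite E1 (exchange_big_dep predT) //=.
apply: eq_big_seq => L; rewrite mem_dvs => HL.
rewrite ps_mulE mulr_sumr -big_filter -(perm_big _ (dvs_shift HL)) big_map.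
apply: eq_bigr => N _; rewrite maddKm mulrA; congr (_ * h _).
by apply/ffunP=> i; rewrite !ffunE subnDA.
Qed.

Lemma ps_mul1 : left_id (@ps_one K n) (@ps_mul K n).
Proof.
move=> f; apply: funext => I; rewrite ps_mulE (bigD1_seq (m0 n)) ?mem_dvs0 ?dvs_uniq //=.
rewrite /ps_one eqxx mul1r msub0 big1 ?addr0 // => J /negbTE ->; by rewrite mul0r.
Qed.

Lemma ps_mulDl : left_distributive (@ps_mul K n) ps_add.
Proof.
move=> f g h; apply: funext => I; rewrite /ps_add !ps_mulE -big_split /=.
by apply: eq_bigr => J _; rewrite mulrDl.
Qed.

Lemma ps_one_neq0 : (@ps_one K n) != ps_zero.
Proof.
apply/eqP=> /(congr1 (fun f => f (m0 n))); rewrite /ps_one /ps_zero eqxx.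
by move/eqP; rewrite oner_eq0.
Qed.

HB.instance Definition _ := GRing.Zmodule_isComNzRing.Build PS
   ps_mulA ps_mulC ps_mul1 ps_mulDl ps_one_neq0.

Lemma psmulE (f g : PS) : f * g = ps_mul f g. Proof. by []. Qed.
Lemma psoneE : (1 : PS) = @ps_one K n. Proof. by []. Qed.
Lemma psaddE (f g : PS) I : (f + g) I = f I + g I. Proof. by []. Qed.
Lemma psoppE (f : PS) I : (- f) I = - f I. Proof. by []. Qed.
Lemma pssubE (f g : PS) I : (f - g) I = f I - g I. Proof. by []. Qed.
Lemma ps0E I : (0 : PS) I = 0. Proof. by []. Qed.
Lemma psexpE (f : PS) j : ps_exp f j = f ^+ j.
Proof. by elim: j => [|j IH] //=; rewrite exprS IH. Qed.
Lemma pssumE (T : Type) (r : seq T) (P : pred T) (F : T -> PS) I :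
  (\sum_(i <- r | P i) F i) I = \sum_(i <- r | P i) F i I.
Proof. by apply: (big_morph (fun f : PS => f I)) => //. Qed.

End PSring.


Fixpoint lexlt (s t : seq nat) : bool :=
  match s, t with
  | x :: s', y :: t' => ltn x y || ((x == y) && lexlt s' t')
  | _, _ => false
  end.

Fixpoint addl (s t : seq nat) : seq nat :=
  match s, t with
  | x :: s', y :: t' => (x + y)%N :: addl s' t'
  | _, _ => [::]
  end.

Lemma lexlt_irr (s : seq nat) : lexlt s s = false.
Proof. by elim: s => //= x s ->; rewrite ltnn eqxx. Qed.

Lemma lexlt_trans (s t u : seq nat) : lexlt s t -> lexlt t u -> lexlt s u.
Proof.
elim: s t u => [|x s IH] [|y t] [|z u] //=.
case/orP=> [H1|/andP[/eqP-> H1]]; case/orP=> [H2|/andP[/eqP<- H2]].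
- by rewrite (ltn_trans H1 H2).
- by rewrite H1.
- by rewrite H2.
- by rewrite (IH _ _ H1 H2) eqxx orbT.
Qed.

Lemma lexlt_total (s t : seq nat) : size s = size t -> s != t -> lexlt s t || lexlt t s.
Proof.
elim: s t => [|x s IH] [|y t] //= [Hs] Hne.
have [Hxy|Hxy|Exy] := ltngtP x y; first by apply/orP; left; apply/orP; left.
  by apply/orP; right; apply/orP; left.
subst y => /=; apply: IH => //; apply: contraNneq Hne => ->.
done.
Qed.

Lemma lexlt_add (s t u : seq nat) : size s = size u -> size t = size u ->
  lexlt (addl s u) (addl t u) = lexlt s t.
Proof.
elim: s t u => [|x s IH] [|y t] [|z u] //= [Hs] [Ht].
by rewrite ltn_add2r eqn_add2r IH.
Qed.

Lemma size_addl (s t : seq nat) : size s = size t -> size (addl s t) = size s.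
Proof. by elim: s t => [|x s IH] [|y t] //= [H]; rewrite IH. Qed.

Lemma addlC (s t : seq nat) : addl s t = addl t s.
Proof. by elim: s t => [|x s IH] [|y t] //=; rewrite addnC IH. Qed.

Lemma lexlt_wf m (s : seq nat) : size s = m ->
  Acc (fun a b => size a = m /\ lexlt a b) s.
Proof.
elim: m s => [|m IH] s Hs.
  constructor => t [Ht Hl]; exfalso.
  by case: t Ht Hl => [|? ?] //; case: s Hs.
case: s Hs => [|x s] /= Hs; first by exfalso.
case: Hs => Hs.
move: s Hs; elim/ltn_ind: x => x IHx s Hs.
have HA := IH s Hs; move: Hs; elim: HA => {}s _ IHs Hs.
constructor => [[|y t]] [Ht].
  by exfalso.
case: Ht => Ht /= /orP [Hyx|/andP[/eqP Eyx H]].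
- exact: IHx.
- subst y; exact: (IHs t (conj Ht H) Ht).
Qed.

Lemma addl_map (T : Type) (f g : T -> nat) (s : seq T) :
  addl (map f s) (map g s) = map (fun x => f x + g x)%N s.
Proof. by elim: s => //= x s ->. Qed.

Section Order.
Variable n : nat.
Local Notation M := (mindex n).

Definition mdeg (I : M) := (\sum_i I i)%N.
Definition key (I : M) : seq nat := mdeg I :: [seq I i | i <- enum 'I_n].
Definition mlt (I J : M) := lexlt (key I) (key J).
Definition mlet (I J : M) := (I == J) || mlt I J.

Lemma size_key I : size (key I) = n.+1.
Proof. by rewrite /= size_map size_enum_ord. Qed.

Lemma key_inj : injective key.
Proof.
move=> I J [_ /eq_in_map H]; apply/ffunP=> i; apply: H; exact: mem_enum.
Qed.

Lemma key_add I J : key (madd I J) = addl (key I) (key J).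
Proof.
rewrite /key /= addl_map /mdeg -big_split /=; congr (_ :: _).
  by apply: eq_bigr => i _; rewrite ffunE.
by apply: eq_map => i; rewrite ffunE.
Qed.

Lemma mlt_irr I : mlt I I = false.
Proof. exact: lexlt_irr. Qed.

Lemma mlt_trans I J L : mlt I J -> mlt J L -> mlt I L.
Proof. exact: lexlt_trans. Qed.

Lemma mlt_total I J : I != J -> mlt I J || mlt J I.
Proof.
move=> H; apply: lexlt_total; first by rewrite !size_key.
by apply/eqP => /key_inj E; rewrite E eqxx in H.
Qed.

Lemma mlt_addr I J L : mlt (madd I L) (madd J L) = mlt I J.
Proof. by rewrite /mlt !key_add lexlt_add // !size_key. Qed.

Lemma mlt_addl I J L : mlt (madd L I) (madd L J) = mlt I J.
Proof. by rewrite ![madd L _]maddC mlt_addr. Qed.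

Lemma mlt_ind (P : M -> Prop) :
  (forall I, (forall J, mlt J I -> P J) -> P I) -> forall I, P I.
Proof.
move=> H I.
have : Acc (fun a b => size a = n.+1 /\ lexlt a b) (key I) by apply: lexlt_wf; rewrite size_key.
move Ek : (key I) => k HA; elim: HA I Ek => {}k _ IH I Ek.
apply: H => J HJ; apply: (IH (key J)) => //; split; first exact: size_key.
by rewrite -Ek.
Qed.

Lemma mlt_deg I J : mlt I J -> (mdeg I <= mdeg J)%N.
Proof. by rewrite /mlt /= => /orP [/ltnW|/andP [/eqP -> _]]. Qed.

Lemma mlt_m0 I : mlt I (m0 n) = false.
Proof.
apply/negbTE/negP => H; have := mlt_deg H.
have -> : mdeg (m0 n) = 0%N by rewrite /mdeg big1 // => i _; rewrite ffunE.
rewrite leqn0 /mdeg sum_nat_eq0 => /forallP HI.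
have E : I = m0 n by apply/ffunP=> i; rewrite ffunE; apply/eqP/HI.
by move: H; rewrite E mlt_irr.
Qed.

Lemma mletNlt I J : ~~ mlt J I -> mlet I J.
Proof.
move=> H; rewrite /mlet; case: eqP => //= /eqP Hne.
by move: (mlt_total Hne); rewrite (negbTE H) orbF.
Qed.

Lemma mlet_lt_trans I J L : mlet I J -> mlt J L -> mlt I L.
Proof. by case/orP=> [/eqP->//|H1 H2]; exact: mlt_trans H1 H2. Qed.

Lemma mlt_let_trans I J L : mlt I J -> mlet J L -> mlt I L.
Proof. by move=> H1 /orP [/eqP<-//|H2]; exact: mlt_trans H1 H2. Qed.

Lemma mlet_trans I J L : mlet I J -> mlet J L -> mlet I L.
Proof.
case/orP=> [/eqP->//|H1] H2; apply/orP; right; exact: mlt_let_trans H1 H2.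
Qed.

Lemma mlet_add a b c d : mlet a c -> mlet b d -> mlet (madd a b) (madd c d).
Proof.
move=> H1 H2; apply: (@mlet_trans _ (madd c b)).
  by case/orP: H1 => [/eqP->|H]; rewrite /mlet ?eqxx // mlt_addr H orbT.
by case/orP: H2 => [/eqP->|H]; rewrite /mlet ?eqxx // mlt_addl H orbT.
Qed.

Lemma mlt_addlet a b c d : mlt a c -> mlet b d -> mlt (madd a b) (madd c d).
Proof.
move=> H1 H2; apply: (@mlt_let_trans _ (madd c b)); first by rewrite mlt_addr.
by case/orP: H2 => [/eqP->|H]; rewrite /mlet ?eqxx // mlt_addl H orbT.
Qed.

Lemma mlet_refl I : mlet I I.
Proof. by rewrite /mlet eqxx. Qed.

End Order.


Section Subfield.
Variable K : fieldType.
Variable S : K -> Prop.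
Hypothesis HS : is_subfield S.

Lemma sf0 : S 0. Proof. by case: HS. Qed.
Lemma sf1 : S 1. Proof. by case: HS. Qed.
Lemma sfB x y : S x -> S y -> S (x - y). Proof. by case: HS => _ _ H _ /H h /h []. Qed.
Lemma sfM x y : S x -> S y -> S (x * y). Proof. by case: HS => _ _ H _ /H h /h []. Qed.
Lemma sfV x : S x -> S x^-1. Proof. by case: HS => _ _ _ H /H. Qed.
Lemma sfN x : S x -> S (- x). Proof. by move=> Hx; rewrite -sub0r; apply: sfB => //; apply: sf0. Qed.
Lemma sfD x y : S x -> S y -> S (x + y).
Proof. by move=> Hx Hy; rewrite -[y]opprK; apply: sfB => //; apply: sfN. Qed.
Lemma sfMn x m : S x -> S (x *+ m).
Proof. by move=> Hx; elim: m => [|m IH]; [rewrite mulr0n; apply: sf0|rewrite mulrS; apply: sfD]. Qed.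
Lemma sfX x m : S x -> S (x ^+ m).
Proof. by move=> Hx; elim: m => [|m IH]; [rewrite expr0; apply: sf1|rewrite exprS; apply: sfM]. Qed.
Lemma sf_nat m : S (m%:R). Proof. exact/sfMn/sf1. Qed.
Lemma sf_sum (I : Type) (r : seq I) (P : pred I) (F : I -> K) :
  (forall i, P i -> S (F i)) -> S (\sum_(i <- r | P i) F i).
Proof. by move=> H; apply: big_ind => //; [apply: sf0|apply: sfD]. Qed.
Lemma sf_prod (I : Type) (r : seq I) (P : pred I) (F : I -> K) :
  (forall i, P i -> S (F i)) -> S (\prod_(i <- r | P i) F i).
Proof. by move=> H; apply: big_ind => //; [apply: sf1|apply: sfM]. Qed.
Lemma sf_div x y : S x -> S y -> S (x / y). Proof. by move=> Hx Hy; apply: sfM => //; apply: sfV. Qed.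
End Subfield.

Section PS2.
Variable K : fieldType.
Variable n : nat.
Local Notation M := (mindex n).
Local Notation PS := (pseries K n).

Definition psC (c : K) : PS := fun I => if I == m0 n then c else 0.

Lemma psC_mul c (f : PS) I : (psC c * f) I = c * f I.
Proof.
rewrite psmulE ps_mulE (bigD1_seq (m0 n)) ?mem_dvs0 ?dvs_uniq //= /psC eqxx msub0.
by rewrite big1 ?addr0 // => J /negbTE ->; rewrite mul0r.
Qed.

Lemma psC_eq0 c : (psC c == 0) = (c == 0).
Proof.
apply/eqP/eqP => [/(congr1 (fun f : PS => f (m0 n)))|->].
  by rewrite /psC eqxx.
by apply: funext => I; rewrite /psC; case: ifP.
Qed.

Lemma psMnE (f : PS) m I : (f *+ m) I = f I *+ m.
Proof. by elim: m => [|m IH]; rewrite ?mulr0n // !mulrS psaddE IH. Qed.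

Lemma ps1E I : (1 : PS) I = if I == m0 n then 1 else 0.
Proof. by []. Qed.

Definition supge (f : PS) (a : M) := forall L, mlt L a -> f L = 0.

Lemma supge0 (f : PS) : supge f (m0 n).
Proof. by move=> L; rewrite mlt_m0. Qed.

Lemma supge_nz (f : PS) a L : supge f a -> f L != 0 -> mlet a L.
Proof.
move=> H HL; apply: mletNlt; apply: contra HL => /H ->; by [].
Qed.

Lemma supge_mul (f g : PS) a b : supge f a -> supge g b -> supge (f * g) (madd a b).
Proof.
move=> Hf Hg L HL; rewrite psmulE ps_mulE big1_seq // => J /andP [_]; rewrite mem_dvs => HJ.
have [Ef|Ef] := eqVneq (f J) 0; first by rewrite Ef mul0r.
have [Eg|Eg] := eqVneq (g (msub L J)) 0; first by rewrite Eg mulr0.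
have := mlet_add (supge_nz Hf Ef) (supge_nz Hg Eg); rewrite msubKm // => H.
by have := mlt_let_trans HL H; rewrite mlt_irr.
Qed.

Lemma coef_mul_low (f g : PS) a b : supge f a -> supge g b ->
  (f * g) (madd a b) = f a * g b.
Proof.
move=> Hf Hg; rewrite psmulE ps_mulE (bigD1_seq a) ?mem_dvs ?mle_addr ?dvs_uniq //=.
rewrite maddKm big1_seq ?addr0 // => J /andP [HJa]; rewrite mem_dvs => HJ.
have [Ef|Ef] := eqVneq (f J) 0; first by rewrite Ef mul0r.
have [Eg|Eg] := eqVneq (g (msub (madd a b) J)) 0; first by rewrite Eg mulr0.
have H1 : mlt a J.
  by case/orP: (supge_nz Hf Ef) => [/eqP E|//]; rewrite E eqxx in HJa.
have H2 := supge_nz Hg Eg.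
have H3 : mlet (madd a b) (madd a (msub (madd a b) J)) by apply: mlet_add => //; apply: mlet_refl.
have H4 : mlt (madd a (msub (madd a b) J)) (madd J (msub (madd a b) J)) by rewrite mlt_addr.
rewrite msubKm // in H4.
by have := mlet_lt_trans H3 H4; rewrite mlt_irr.
Qed.

Lemma supge_add (f g : PS) a : supge f a -> supge g a -> supge (f + g) a.
Proof. by move=> Hf Hg L HL; rewrite psaddE Hf ?Hg ?addr0. Qed.

Lemma supge_opp (f : PS) a : supge f a -> supge (- f) a.
Proof. by move=> Hf L HL; rewrite psoppE Hf ?oppr0. Qed.

Lemma supge_mulr (f g : PS) a : supge f a -> supge (f * g) a.
Proof. by move=> Hf; have := supge_mul Hf (supge0 g); rewrite /madd; congr supge; apply/ffunP=> i; rewrite !ffunE addn0. Qed.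

Definition psK (S : K -> Prop) (f : PS) := forall I, S (f I).

Section PSK.
Variable S : K -> Prop.
Hypothesis HS : is_subfield S.

Lemma psK0 : psK S 0. Proof. by move=> I; apply: sf0. Qed.
Lemma psK1 : psK S 1. Proof. by move=> I; rewrite ps1E; case: ifP => _; [apply: sf1|apply: sf0]. Qed.
Lemma psKD f g : psK S f -> psK S g -> psK S (f + g). Proof. by move=> Hf Hg I; apply: sfD. Qed.
Lemma psKN f : psK S f -> psK S (- f). Proof. by move=> Hf I; apply: sfN. Qed.
Lemma psKB f g : psK S f -> psK S g -> psK S (f - g). Proof. by move=> Hf Hg I; apply: sfB. Qed.
Lemma psKM f g : psK S f -> psK S g -> psK S (f * g).
Proof. by move=> Hf Hg I; rewrite psmulE ps_mulE; apply: sf_sum => // J _; apply: sfM. Qed.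
Lemma psKMn f m : psK S f -> psK S (f *+ m). Proof. by move=> Hf I; rewrite psMnE; apply: sfMn. Qed.
Lemma psKX f m : psK S f -> psK S (f ^+ m).
Proof. by move=> Hf; elim: m => [|m IH]; [apply: psK1|rewrite exprS; apply: psKM]. Qed.
Lemma psK_sum (I : Type) (r : seq I) (P : pred I) (F : I -> PS) :
  (forall i, P i -> psK S (F i)) -> psK S (\sum_(i <- r | P i) F i).
Proof. by move=> H; apply: big_ind => //; [apply: psK0|apply: psKD]. Qed.
Lemma psK_horner (p : {poly PS}) x : (forall i, psK S p`_i) -> psK S x -> psK S p.[x].
Proof.
move=> Hp Hx; rewrite horner_coef; apply: psK_sum => i _; apply: psKM => //; exact: psKX.
Qed.
Lemma psKC c : S c -> psK S (psC c).
Proof. by move=> Hc I; rewrite /psC; case: ifP => _ //; apply: sf0. Qed.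
End PSK.

Definition mono (L : M) (c : K) : PS := fun J => if J == L then c else 0.

Lemma mono_mul L1 L2 c1 c2 : mono L1 c1 * mono L2 c2 = mono (madd L1 L2) (c1 * c2).
Proof.
apply: funext => J; rewrite psmulE ps_mulE /mono.
have [HL|HL] := boolP (mle L1 J).
  rewrite (bigD1_seq L1) ?mem_dvs ?dvs_uniq //= eqxx big1_seq ?addr0; last first.
    by move=> J' /andP [/negbTE -> _]; rewrite mul0r.
  have [->|Hne] := eqVneq J (madd L1 L2); first by rewrite maddKm eqxx.
  case: eqP => [E|_]; last by rewrite mulr0.
  by case/negP: Hne; rewrite -E msubKm.
rewrite big1_seq; last first.
  move=> J' /andP [_]; rewrite mem_dvs => HJ'; case: eqP => [E|]; last by rewrite mul0r.
  by case/negP: HL; rewrite -E.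
case: eqP => // E; case/negP: HL; rewrite E; exact: mle_addr.
Qed.

Definition mscale (m : nat) (L : M) : M := [ffun i => (m * L i)%N].

Lemma mono_exp L c m : mono L c ^+ m = mono (mscale m L) (c ^+ m).
Proof.
elim: m => [|m IH].
  have -> : mscale 0 L = m0 n by apply/ffunP => i; rewrite !ffunE.
  by rewrite !expr0; apply: funext => J; rewrite ps1E /mono.
rewrite exprS IH mono_mul exprS; congr mono.
by apply/ffunP => i; rewrite !ffunE mulSn.
Qed.

Lemma mscale_inj m : (0 < m)%N -> injective (mscale m).
Proof.
move=> Hm I J /ffunP H; apply/ffunP => i; have := H i; rewrite !ffunE.
by move/eqP; rewrite eqn_mul2l eqn0Ngt Hm /= => /eqP.
Qed.

Definition agree (N : M) (f g : PS) := forall L, mle L N -> f L = g L.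

Lemma agree_mul N f f' g g' : agree N f f' -> agree N g g' -> agree N (f * g) (f' * g').
Proof.
move=> Hf Hg L HL; rewrite !psmulE !ps_mulE; apply: eq_big_seq => J; rewrite mem_dvs => HJ.
rewrite Hf ?Hg //; [exact: mle_trans (mle_subr _ _) HL|exact: mle_trans HJ HL].
Qed.

Lemma agree_exp N f g m : agree N f g -> agree N (f ^+ m) (g ^+ m).
Proof.
move=> H; elim: m => [|m IH]; first by move=> L _; rewrite !expr0.
by rewrite !exprS; apply: agree_mul.
Qed.

Lemma ps_frob (p : nat) (s : PS) I : p \in [pchar K] ->
  (s ^+ p) (mscale p I) = s I ^+ p.
Proof.
move=> Hp; have Hp0 : (0 < p)%N by rewrite prime_gt0 // (pcharf_prime Hp).
have HpPS : p \in [pchar PS].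
  rewrite inE (pcharf_prime Hp) /=; apply/eqP/funext => J.
  by rewrite psMnE ps0E ps1E; case: ifP => _; rewrite ?mul0rn // (pcharf0 Hp).
pose N := mscale p I.
pose T : PS := \sum_(L <- dvs N) mono L (s L).
have HT : agree N s T.
  move=> L HL; rewrite /T pssumE (bigD1_seq L) ?mem_dvs ?dvs_uniq //= /mono eqxx.
  by rewrite big1_seq ?addr0 // => J /andP [/negbTE HJ _]; rewrite eq_sym HJ.
rewrite (agree_exp p HT (mle_refl N)).
have -> : T ^+ p = pFrobenius_aut HpPS T by [].
rewrite /T rmorph_sum pssumE.
rewrite (bigD1_seq I) ?mem_dvs ?dvs_uniq //=; last first.
  by apply/mleP => i; rewrite ffunE leq_pmull.
rewrite pFrobenius_autE mono_exp /mono eqxx big1_seq ?addr0 // => J /andP [HJ _].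
rewrite pFrobenius_autE mono_exp /mono; case: eqP => // /(mscale_inj Hp0) E.
by rewrite E eqxx in HJ.
Qed.

End PS2.


Section Span.
Variable K : fieldType.
Variable k : K -> Prop.
Hypothesis Hk : is_subfield k.

Definition kspan (u : seq K) (x : K) :=
  exists2 c : nat -> K, (forall i, k (c i)) & x = \sum_(i < size u) c i * u`_i.

Lemma kspan0 u : kspan u 0.
Proof. by exists (fun _ => 0) => [i|]; [apply: sf0|rewrite big1 // => i _; rewrite mul0r]. Qed.

Lemma kspanD u x y : kspan u x -> kspan u y -> kspan u (x + y).
Proof.
move=> [c1 H1 ->] [c2 H2 ->]; exists (fun i => c1 i + c2 i) => [i|]; first exact: sfD.
by rewrite -big_split; apply: eq_bigr => i _; rewrite mulrDl.
Qed.

Lemma kspanZ u a x : k a -> kspan u x -> kspan u (a * x).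
Proof.
move=> Ha [c H ->]; exists (fun i => a * c i) => [i|]; first exact: sfM.
by rewrite mulr_sumr; apply: eq_bigr => i _; rewrite mulrA.
Qed.

Lemma kspanN u x : kspan u x -> kspan u (- x).
Proof. by move=> H; rewrite -mulN1r; apply: kspanZ => //; apply: (sfN Hk (sf1 Hk)). Qed.

Lemma kspanB u x y : kspan u x -> kspan u y -> kspan u (x - y).
Proof. by move=> Hx Hy; apply: kspanD => //; apply: kspanN. Qed.

Lemma kspan_sum u (I : Type) (r : seq I) (P : pred I) (F : I -> K) :
  (forall i, P i -> kspan u (F i)) -> kspan u (\sum_(i <- r | P i) F i).
Proof. by move=> H; apply: big_ind => //; [apply: kspan0|apply: kspanD]. Qed.

Lemma kspan_nth u i : (i < size u)%N -> kspan u u`_i.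
Proof.
move=> Hi; exists (fun j => if j == i then 1 else 0) => [j|].
  by case: ifP => _; [apply: sf1|apply: sf0].
rewrite (bigD1 (Ordinal Hi)) //= eqxx mul1r big1 ?addr0 // => j Hj.
by rewrite ifN ?mul0r //; apply: contra Hj => /eqP E; apply/eqP/val_inj.
Qed.

Lemma kspan_mem u y : y \in u -> kspan u y.
Proof. by move=> Hy; rewrite -(nth_index 0 Hy); apply: kspan_nth; rewrite index_mem. Qed.

Lemma kspan_sub u v x : (forall y, y \in u -> kspan v y) -> kspan u x -> kspan v x.
Proof.
move=> H [c Hc ->]; apply: kspan_sum => i _; apply: kspanZ => //; apply: H; exact: mem_nth.
Qed.

Lemma kspan_mulr u w b x : (forall y, y \in u -> kspan w (y * b)) -> kspan u x -> kspan w (x * b).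
Proof.
move=> H [c Hc ->]; rewrite mulr_suml; apply: kspan_sum => i _; rewrite -mulrA.
apply: kspanZ => //; apply: H; exact: mem_nth.
Qed.

Lemma kspan_consE y u x : kspan (y :: u) x ->
  exists c0, [/\ k c0, kspan u (x - c0 * y) & x = c0 * y + (x - c0 * y)].
Proof.
move=> [c Hc ->]; exists (c 0%N); split => //; last by rewrite addrC subrK.
rewrite big_ord_recl /= addrAC subrr add0r; exists (fun i => c i.+1) => // i.
Qed.

Lemma kspan_cons_mem y u : kspan (y :: u) y.
Proof. by apply: kspan_mem; rewrite mem_head. Qed.

Lemma kspan_cons u y x : kspan u x -> kspan (y :: u) x.
Proof. apply: kspan_sub => z Hz; apply: kspan_mem; by rewrite in_cons Hz orbT. Qed.

Lemma gen_sub (F A S : K -> Prop) x : is_subfield S -> (forall y, F y -> S y) ->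
  (forall y, A y -> S y) -> gen_field F A x -> S x.
Proof. by move=> H1 H2 H3; apply. Qed.

Lemma gen_is_subfield (F A : K -> Prop) : is_subfield (gen_field F A).
Proof.
split.
- by move=> S HS _ _; apply: sf0.
- by move=> S HS _ _; apply: sf1.
- move=> x y Hx Hy; split=> S HS HF HA.
    by apply: sfB => //; [apply: Hx|apply: Hy].
  by apply: sfM => //; [apply: Hx|apply: Hy].
- by move=> x Hx S HS HF HA; apply: sfV => //; apply: Hx.
Qed.

Lemma gen_base (F A : K -> Prop) x : F x -> gen_field F A x.
Proof. by move=> Hx S _ HF _; apply: HF. Qed.

Lemma gen_gen (F A : K -> Prop) x : A x -> gen_field F A x.
Proof. by move=> Hx S _ _ HA; apply: HA. Qed.

Lemma take_poly1 (q : {poly K}) : take_poly 1 q = (q`_0)%:P.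
Proof. by apply/polyP => i; rewrite coef_take_poly coefC; case: i. Qed.

Lemma inv_poly x (q : {poly K}) : x != 0 -> q != 0 -> (forall i, k q`_i) -> q.[x] = 0 ->
  exists2 r : {poly K}, (forall i, k r`_i) & x^-1 = r.[x].
Proof.
move=> Hx; move Hs : (size q) => s; elim/ltn_ind: s q Hs => s IH q Hs Hq Hqk Hqx.
have Eq := poly_take_drop 1 q; rewrite take_poly1 expr1 in Eq.
set q1 := drop_poly 1 q in Eq.
have Hq1k : forall i, k q1`_i by move=> i; rewrite coef_drop_poly.
have Hx1 : q`_0 + q1.[x] * x = 0.
  by have := congr1 (fun p => p.[x]) Eq; rewrite hornerD hornerC hornerMX Hqx.
have [q0|q0] := eqVneq (q`_0) 0.
- rewrite q0 add0r in Hx1; have Hq1x : q1.[x] = 0 by apply/eqP; rewrite -(mulIr_eq0 _ (mulIf Hx)) Hx1.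
  have Hq10 : q1 != 0 by apply: contraNneq Hq => E; rewrite -Eq E q0 mul0r addr0.
  apply: (IH (size q1)) => //; rewrite -Hs /q1 size_drop_poly.
  by rewrite subn1 ltn_predL size_poly_gt0.
- exists (- (q`_0)^-1 *: q1) => [i|]; first by rewrite coefZ; apply: (sfM Hk) => //; apply: (sfN Hk); apply: (sfV Hk).
  rewrite hornerZ.
  have : x * (- (q`_0)^-1 * q1.[x]) = 1.
    have E : x * q1.[x] = - q`_0 by rewrite mulrC -(addKr (q`_0) (q1.[x] * x)) Hx1 addr0.
    by rewrite mulrA [x * _]mulrC -mulrA E mulrN mulNr opprK mulVf.
  move=> H; rewrite -[RHS]mul1r -(mulVf Hx) -mulrA H mulr1 //.
Qed.

Hypothesis Halg : forall x : K, algebraic_over k x.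

Lemma adjoin (V' : K -> Prop) (u' : seq K) (b : K) :
  is_subfield V' -> (forall x, k x -> V' x) -> (forall x, V' x -> kspan u' x) ->
  exists V : K -> Prop, [/\ is_subfield V, (forall x, V' x -> V x), V b
     & exists u, forall x, V x -> kspan u x].
Proof.
move=> HV' HkV' HsV'.
have [q Hq0 [Hqk /rootP Hqb]] := Halg b.
have Hsq : (1 < size q)%N.
  rewrite ltnNge; apply/negP => Hs.
  have [c Ec] : exists c, q = c%:P by exists q`_0; apply/size1_polyC.
  by move: Hq0 Hqb; rewrite Ec hornerC polyC_eq0 => H1 H2; rewrite H2 eqxx in H1.
set d := (size q).-1.
have Hd : (0 < d)%N by rewrite /d; move: Hsq; case: (size q) => // [] [].
set lc := q`_d.
have Hlc : lc != 0.
  by rewrite /lc /d -lead_coefE lead_coef_eq0.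
have Hbd : b ^+ d = - (lc^-1 * \sum_(e < d) q`_e * b ^+ e).
  move: Hqb; rewrite horner_coef.
  have -> : size q = d.+1 by rewrite /d prednK // ltnW.
  rewrite big_ord_recr /= -/lc => /eqP; rewrite addrC addr_eq0 => /eqP H.
  by rewrite -[b ^+ d]mul1r -(mulVf Hlc) -mulrA H mulrN.
have [d' Ed] : exists d', d = d'.+1 by exists d.-1; rewrite prednK.
pose V x := exists2 v : nat -> K, (forall e, V' (v e)) & x = \sum_(e < d) v e * b ^+ e.
have V'V x : V' x -> V x.
  move=> Hx; exists (fun e => if e == 0%N then x else 0) => [e|].
    by case: ifP => _ //; apply: (sf0 HV').
  rewrite Ed big_ord_recl /= expr0 mulr1 big1 ?addr0 //.
  by move=> i _; rewrite mul0r.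
have VB x y : V x -> V y -> V (x - y).
  move=> [v1 H1 ->] [v2 H2 ->]; exists (fun e => v1 e - v2 e) => [e|]; first exact: sfB.
  by rewrite -sumrB; apply: eq_bigr => i _; rewrite mulrBl.
have VZ a x : V' a -> V x -> V (a * x).
  move=> Ha [v H ->]; exists (fun e => a * v e) => [e|]; first exact: sfM.
  by rewrite mulr_sumr; apply: eq_bigr => i _; rewrite mulrA.
have V0 : V 0 by apply: (V'V); apply: (sf0 HV').
have V1 : V 1 by apply: (V'V); apply: (sf1 HV').
have VD x y : V x -> V y -> V (x + y).
  by move=> Hx Hy; rewrite -[y]opprK -[- y]sub0r; apply: (VB) => //; apply: (VB).
have Vb x : V x -> V (b * x).
  move=> [v Hv ->].
  rewrite Ed in Hbd *.
  rewrite mulr_sumr big_ord_recr /=.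
  have E1 : \sum_(i < d') b * (v i * b ^+ i) = \sum_(i < d'.+1) (if i == 0%N :> nat then 0 else v i.-1) * b ^+ i.
    rewrite big_ord_recl /= mul0r add0r; apply: eq_bigr => i _.
    by rewrite /= mulrCA -exprS.
  rewrite E1 mulrCA -exprS Hbd mulrN mulr_sumr mulr_sumr -sumrN -big_split /=.
  exists (fun e => (if e == 0%N :> nat then 0 else v e.-1) - v d' * (lc^-1 * q`_e)) => [e|].
    apply: (sfB HV'); first by case: ifP => _ //; apply: (sf0 HV').
    apply: (sfM HV'); first exact: Hv.
    by apply: (sfM HV'); [apply: (sfV HV'); apply: HkV'; apply: Hqk|apply: HkV'; apply: Hqk].
  by rewrite Ed; apply: eq_bigr => i _; rewrite mulrBl; congr (_ - _); rewrite !mulrA.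
have VbX x e : V x -> V (x * b ^+ e).
  move=> Hx; elim: e => [|e IH]; first by rewrite expr0 mulr1.
  by rewrite exprS mulrCA; apply: (Vb).
have VM x y : V x -> V y -> V (x * y).
  move=> Hx [v Hv ->]; rewrite mulr_sumr.
  apply: big_ind => //; move=> i _; rewrite mulrCA; apply: (VZ) => //; exact: (VbX).
have VX x e : V x -> V (x ^+ e).
  by move=> Hx; elim: e => [|e IH]; [rewrite expr0|rewrite exprS; apply: (VM)].
have HVV : is_subfield V.
  split => //; first by move=> x y Hx Hy; split; [apply: (VB)|apply: (VM)].
  move=> x Hx; have [->|Hx0] := eqVneq x 0; first by rewrite invr0.
  have [r Hr0 [Hrk /rootP Hrx]] := Halg x.
  have [r1 Hr1 ->] := inv_poly Hx0 Hr0 Hrk Hrx.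
  rewrite horner_coef; apply: big_ind => // i _.
  by apply: (VZ); [apply: HkV'|apply: (VX)].
exists V; split => //.
  by rewrite -[b]mulr1; apply: (Vb).
exists [seq y * b ^+ e | e <- iota 0 d, y <- u'] => x [v Hv ->].
apply: kspan_sum => e _; apply: (kspan_mulr (u := u')); last exact: HsV'.
move=> y Hy; apply: kspan_mem; apply: (allpairs_f (fun e y => y * b ^+ e)) => //.
by rewrite mem_iota /= add0n.
Qed.

Lemma finite_gen (s : seq K) :
  exists V : K -> Prop, [/\ is_subfield V, (forall x, k x -> V x),
     (forall y, y \in s -> V y) & exists u, forall x, V x -> kspan u x].
Proof.
elim: s => [|b s [V' [HV' HkV' HsV' [u' Hu']]]].
  exists k; split => //; exists [:: 1] => x Hx; exists (fun _ => x) => //.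
  by rewrite big_ord1 mulr1.
have [V [HV HV'V HVb [u Hu]]] := adjoin b HV' HkV' Hu'.
exists V; split => //; first by move=> x /HkV' /HV'V.
  by move=> y; rewrite in_cons => /orP [/eqP ->|/HsV' /HV'V].
by exists u.
Qed.

End Span.


Lemma taylor1 (R : comNzRingType) (p : {poly R}) x h :
  exists r, p.[x + h] = p.[x] + h * p^`().[x] + h ^+ 2 * r.
Proof.
elim/poly_ind: p => [|p c [r IH]].
  by exists 0; rewrite deriv0 !horner0 mulr0 mulr0 !addr0.
exists (p^`().[x] + r * (x + h)).
rewrite derivMXaddC !(hornerD, hornerMX, hornerC) IH; ring.
Qed.

Lemma taylor0 (R : comNzRingType) (p : {poly R}) x h :
  exists r, p.[x + h] = p.[x] + h * r.
Proof.
have [r ->] := taylor1 p x h; exists (p^`().[x] + h * r); ring.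
Qed.

Section Sep.
Variable K : fieldType.
Variable n : nat.
Local Notation M := (mindex n).
Local Notation PS := (pseries K n).

Lemma supp_min (f : PS) : f != 0 -> exists J0, f J0 != 0 /\ supge f J0.
Proof.
move=> Hf.
have [I HI] : exists I, f I != 0.
  case: (pselect (exists I, f I != 0)) => [//|H]; case/negP: Hf; apply/eqP/funext => I.
  rewrite ps0E; apply/eqP; apply: contraT => HI; by case: H; exists I.
elim/(@mlt_ind n): I HI => I IH HI.
have [[J HJ HfJ]|H] := pselect (exists2 J, mlt J I & f J != 0).
  exact: IH HJ HfJ.
exists I; split => // L HL; apply/eqP; apply: contraT => HfL; by case: H; exists L.
Qed.

Lemma le_mdeg (L : M) i : (L i <= mdeg L)%N.
Proof. by rewrite /mdeg (bigD1 i) //= leq_addr. Qed.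

Variable k : K -> Prop.
Hypothesis Hk : is_subfield k.

Lemma psK_deriv (P : {poly PS}) i : (forall j, psK k P`_j) -> psK k P^`()`_i.
Proof. by move=> H; rewrite coef_deriv; apply: (psKMn Hk). Qed.

Lemma psK_sub (S1 S2 : K -> Prop) (f : PS) : (forall x, S1 x -> S2 x) -> psK S1 f -> psK S2 f.
Proof. by move=> H Hf I; apply: H. Qed.

Variable s : PS.
Variable P : {poly PS}.
Hypothesis HPk : forall j, psK k P`_j.
Hypothesis HP : P.[s] = 0.
Variable J0 : M.
Hypothesis HDJ0 : P^`().[s] J0 != 0.
Hypothesis HDs : supge P^`().[s] J0.

Lemma sep_coeffs (V : K -> Prop) : is_subfield V -> (forall x, k x -> V x) ->
  (forall L, mlet L J0 -> V (s L)) -> forall I, V (s I).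
Proof.
move=> HV HkV H0 I; elim/(@mlt_ind n): I => I IH.
have [HI|HI] := boolP (mlet I J0); first exact: H0.
have HJI : mlt J0 I by apply: contraNT HI => /mletNlt.
pose A : PS := fun L => if mlt L I then s L else 0.
pose B := s - A.
have HA : psK V A by move=> L; rewrite /A; case: ifP => HL; [apply: IH|apply: (sf0 HV)].
have HB : supge B I by move=> L HL; rewrite /B pssubE /A HL subrr.
have HBI : B I = s I by rewrite /B pssubE /A mlt_irr subr0.
have EAB : A + B = s by rewrite /B addrC subrK.
have [r Hr] := taylor1 P A B.
have [r2 Hr2] := taylor0 P^`() A B.
rewrite EAB HP in Hr; rewrite EAB in Hr2.
have HPV : forall j, psK V P`_j by move=> j; apply: (psK_sub HkV).
have HDA : psK V P^`().[A].
  apply: (psK_horner HV) => // j; apply: (psK_sub HkV); exact: psK_deriv.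
have HBr2 : supge (B * r2) I by apply: supge_mulr.
have Ec : P^`().[s] J0 = P^`().[A] J0 by rewrite Hr2 psaddE (HBr2 _ HJI) addr0.
have E0 : 0 = P.[A] (madd I J0) + s I * P^`().[s] J0.
  have := congr1 (fun f : PS => f (madd I J0)) Hr.
  have -> : P^`().[A] = P^`().[s] - B * r2 by rewrite Hr2 addrK.
  rewrite ps0E !psaddE mulrBr pssubE (coef_mul_low HB HDs) HBI.
  have Z1 : supge (B * (B * r2)) (madd I I) by apply: supge_mul.
  have Z2 : supge (B ^+ 2 * r) (madd I I) by rewrite expr2; apply/supge_mulr/supge_mul.
  rewrite (Z1 _) ?mlt_addl // (Z2 _) ?mlt_addl // subr0 addr0 //.
have Hc : V (P^`().[s] J0) by rewrite Ec; apply: HDA.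
have Es : s I = - P.[A] (madd I J0) / P^`().[s] J0.
  apply: (mulIf HDJ0); rewrite mulrVK ?unitfE //.
  by apply/eqP; rewrite -addr_eq0 addrC -E0.
rewrite Es; apply: (sf_div HV) => //; apply: (sfN HV).
by apply: (psK_horner HV) => //.
Qed.

Hypothesis Halg : forall x : K, algebraic_over k x.

Lemma sep_finite : finite_degree k (gen_field k (fun y => exists I, y = s I)).
Proof.
have [V [HV HkV Hs0 [u Hu]]] := finite_gen Hk Halg [seq s L | L <- box n (mdeg J0).+1].
have Hall : forall I, V (s I).
  apply: (sep_coeffs HV HkV) => L HL; apply: Hs0; apply: map_f.
  rewrite mem_box; apply/forallP => i; rewrite ltnS.
  apply: leq_trans (le_mdeg L i) _.
  by case/orP: HL => [/eqP ->//|/mlt_deg].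
exists u => x Hx; apply: Hu; apply: (gen_sub HV HkV _ Hx).
by move=> y [I ->].
Qed.

End Sep.


Section Proot.
Variable K : closedFieldType.
Variable p : nat.
Hypothesis Hp : p \in [pchar K].

Lemma p_gt0 : (0 < p)%N.
Proof. by rewrite prime_gt0 // (pcharf_prime Hp). Qed.

Lemma proot c : exists y : K, y ^+ p = c.
Proof.
have /closed_rootP [y Hy] : size ('X^p - c%:P : {poly K}) != 1%N.
  by rewrite size_XnsubC ?p_gt0 // eqSS -lt0n p_gt0.
by exists y; move: Hy; rewrite /root !hornerE subr_eq0 => /eqP.
Qed.

Definition pr (c : K) : K := projT1 (cid (proot c)).
Lemma prE c : pr c ^+ p = c.
Proof. exact: (projT2 (cid (proot c))). Qed.

Lemma frobB (x y : K) : (x - y) ^+ p = x ^+ p - y ^+ p.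
Proof. exact: (rmorphB (pFrobenius_aut Hp) x y). Qed.

Lemma frob_sum (I : Type) (r : seq I) (P : pred I) (F : I -> K) :
  (\sum_(i <- r | P i) F i) ^+ p = \sum_(i <- r | P i) F i ^+ p.
Proof. exact: (rmorph_sum (pFrobenius_aut Hp) r P F). Qed.

Lemma frob_inj (x y : K) : x ^+ p = y ^+ p -> x = y.
Proof.
move=> H; apply/eqP; rewrite -subr_eq0.
have : (x - y) ^+ p == 0 by rewrite frobB H subrr.
by rewrite expf_eq0 p_gt0.
Qed.

Variable k : K -> Prop.
Hypothesis Hk : is_subfield k.
Hypothesis Hfg : fg_over_perfect k.
Hypothesis Halg : forall x : K, algebraic_over k x.

Lemma perfect_part : exists v : seq K, forall c, k c -> exists y, kspan k v y /\ y ^+ p = c.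
Proof.
have [F0 [HF0 HF0p HF0k [s Hs]]] := Hfg.
have [V [HV HkV HsV [v Hv]]] := finite_gen Hk Halg [seq pr x | x <- s].
pose Z c := exists2 y, V y & y ^+ p = c.
have HZ : is_subfield Z.
  split.
  - by exists 0; [apply: (sf0 HV)|rewrite expr0n /= eqn0Ngt p_gt0].
  - by exists 1; [apply: (sf1 HV)|rewrite expr1n].
  - move=> x y [x1 Hx1 <-] [y1 Hy1 <-]; split.
      by exists (x1 - y1); [apply: (sfB HV)|rewrite frobB].
    by exists (x1 * y1); [apply: (sfM HV)|rewrite exprMn].
  - by move=> x [x1 Hx1 <-]; exists x1^-1; [apply: (sfV HV)|rewrite exprVn].
have HkZ : forall c, k c -> Z c.
  move=> c /Hs; apply: (gen_sub HZ).
    move=> y Hy; have [z Hz Ez] := HF0p p Hp y Hy.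
    by exists z => //; apply/HkV/HF0k.
  move=> y Hy; exists (pr y); last exact: prE.
  by apply: HsV; apply: map_f.
exists v => c /HkZ [y Hy Ey]; exists y; split => //; exact: Hv.
Qed.

Lemma insep_finite (n : nat) (s : pseries K n) :
  finite_degree k (gen_field k (fun y => exists I, y = (s ^+ p) I)) ->
  finite_degree k (gen_field k (fun y => exists I, y = s I)).
Proof.
set L' := gen_field k _ => [[u' Hu']].
have [v Hv] := perfect_part.
pose zs := [seq pr x | x <- u'].
pose W x := L' (x ^+ p).
have HL' : is_subfield L' by apply: gen_is_subfield.
have HW : is_subfield W.
  split.
  - by rewrite /W expr0n eqn0Ngt p_gt0; apply: (sf0 HL').
  - by rewrite /W expr1n; apply: (sf1 HL').
  - by move=> x y Hx Hy; rewrite /W frobB exprMn; split; [apply: (sfB HL')|apply: (sfM HL')].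
  - by move=> x Hx; rewrite /W exprVn; apply: (sfV HL').
have HkW : forall x, k x -> W x.
  by move=> x Hx; apply: gen_base; apply: (sfX Hk).
have HsW : forall y, (exists I, y = s I) -> W y.
  move=> y [I ->]; rewrite /W -ps_frob //; apply: gen_gen; by exists (mscale p I).
exists [seq y * z | y <- v, z <- zs] => x Hx.
have HxW : W x := gen_sub HW HkW HsW Hx.
have [c Hc Ex] := Hu' _ HxW.
have Hy : forall i, exists y, kspan k v y /\ y ^+ p = c i by move=> i; apply: Hv.
have [yf Hyf] := choice Hy.
have -> : x = \sum_(i < size u') yf i * zs`_i.
  apply: frob_inj; rewrite Ex frob_sum; apply: eq_bigr => i _.
  rewrite exprMn (proj2 (Hyf i)) /zs (nth_map 0) ?prE //.
apply: (kspan_sum Hk) => i _; apply: (kspan_mulr Hk (u := v)); last first.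
  exact: (proj1 (Hyf i)).
move=> y Hy1; apply: (kspan_mem Hk); apply: (allpairs_f (fun y z => y * z)) => //.
by apply: mem_nth; rewrite size_map.
Qed.

End Proot.


Section Basis.
Variable K : fieldType.
Variable k : K -> Prop.
Hypothesis Hk : is_subfield k.

Lemma kspan_nil x : kspan k [::] x -> x = 0.
Proof. by case=> c _ ->; rewrite big_ord0. Qed.

Lemma extract_basis (u : seq K) : forall W : K -> Prop, W 0 ->
  (forall x y, W x -> W y -> W (x - y)) -> (forall a x, k a -> W x -> W (a * x)) ->
  (forall x, W x -> kspan k u x) ->
  exists w, (forall y, y \in w -> W y) /\ forall x, W x -> kspan k w x.
Proof.
elim: u => [|u0 u IH] W W0 WB WZ Wu.
  exists [::]; split => // x /Wu /kspan_nil ->; exact: kspan0.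
have [Hall|Hnot] := pselect (forall x, W x -> kspan k u x); first exact: IH.
have [[x0 [Wx0 Nx0]]|H] := pselect (exists x0, W x0 /\ ~ kspan k u x0); last first.
  exfalso; apply: Hnot => x Wx.
  by case: (pselect (kspan k u x)) => // N; exfalso; apply: H; exists x.
have [c0 [Hc0 Hz0 Ex0]] := kspan_consE (Wu _ Wx0).
have c0nz : c0 != 0.
  apply/eqP => E; apply: Nx0; move: Hz0; by rewrite E mul0r subr0.
pose W' y := W y /\ kspan k u y.
have [w' [Hw'W Hw'sp]] : exists w', (forall y, y \in w' -> W' y) /\ forall x, W' x -> kspan k w' x.
  apply: IH.
  - by split => //; apply: kspan0.
  - by move=> x y [Hx1 Hx2] [Hy1 Hy2]; split; [apply: WB|apply: (kspanB Hk)].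
  - by move=> a x Ha [Hx1 Hx2]; split; [apply: WZ|apply: (kspanZ Hk)].
  - by move=> x [].
exists (x0 :: w'); split.
  by move=> y; rewrite in_cons => /orP [/eqP ->|/Hw'W []].
move=> y Wy.
have [d0 [Hd0 Hz _]] := kspan_consE (Wu _ Wy).
set a := d0 / c0.
have Ha : k a by apply: (sf_div Hk).
have Ht : W' (y - a * x0).
  split; first by apply: WB => //; apply: WZ.
  have -> : y - a * x0 = (y - d0 * u0) - a * (x0 - c0 * u0).
    by rewrite /a mulrBr mulrA divfK // opprB addrA subrK.
  by apply: (kspanB Hk) => //; apply: (kspanZ Hk).
have -> : y = a * x0 + (y - a * x0) by rewrite addrC subrK.
apply: (kspanD Hk); first by apply: (kspanZ Hk) => //; apply: kspan_cons_mem.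
by apply: (kspan_cons Hk); apply: Hw'sp.
Qed.
End Basis.

Section Main.
Variable K : fieldType.
Variable n : nat.
Local Notation M := (mindex n).
Local Notation PS := (pseries K n).
Variable k : K -> Prop.
Hypothesis Hk : is_subfield k.

Definition polyK (P : {poly PS}) := forall i, psK k P`_i.

Lemma polyKD P Q : polyK P -> polyK Q -> polyK (P + Q).
Proof. by move=> HP HQ i; rewrite coefD; apply: (psKD Hk). Qed.
Lemma polyKN P : polyK P -> polyK (- P).
Proof. by move=> HP i; rewrite coefN; apply: (psKN Hk). Qed.
Lemma polyKM P Q : polyK P -> polyK Q -> polyK (P * Q).
Proof. by move=> HP HQ i; rewrite coefM; apply: (psK_sum Hk) => j _; apply: (psKM Hk). Qed.
Lemma polyK1 : polyK 1.
Proof. by move=> i; rewrite coef1; apply: (psKMn Hk); apply: (psK1 Hk). Qed.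
Lemma polyKX : polyK 'X.
Proof. by move=> i; rewrite coefX; apply: (psKMn Hk); apply: (psK1 Hk). Qed.
Lemma polyKC c : psK k c -> polyK c%:P.
Proof. by move=> Hc i; rewrite coefC; case: ifP => _ //; apply: (psK0 Hk). Qed.
Lemma polyKMn P m : polyK P -> polyK (P *+ m).
Proof. by move=> HP i; rewrite coefMn; apply: (psKMn Hk). Qed.
Lemma polyK_sum (I : Type) (r : seq I) (P : pred I) (F : I -> {poly PS}) :
  (forall i, P i -> polyK (F i)) -> polyK (\sum_(i <- r | P i) F i).
Proof. by move=> H; apply: big_ind => //; [move=> i; rewrite coef0; apply: (psK0 Hk)|apply: polyKD]. Qed.
Lemma polyK_prod (I : Type) (r : seq I) (P : pred I) (F : I -> {poly PS}) :
  (forall i, P i -> polyK (F i)) -> polyK (\prod_(i <- r | P i) F i).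
Proof. by move=> H; apply: big_ind => //; [apply: polyK1|apply: polyKM]. Qed.
Lemma polyKX_exp P m : polyK P -> polyK (P ^+ m).
Proof. by move=> HP; elim: m => [|m IH]; [rewrite expr0; apply: polyK1|rewrite exprS; apply: polyKM]. Qed.

Lemma alg_of_poly (s : PS) (P : {poly PS}) :
  P != 0 -> polyK P -> P.[s] = 0 -> ps_algebraic k s.
Proof.
move=> HP0 HPk HPs; exists (size P).-1, (fun j => P`_j); split.
- by move=> j I; apply: HPk.
- exists (size P).-1 => //.
  have : lead_coef P != 0 by rewrite lead_coef_eq0.
  rewrite lead_coefE => H.
  case: (pselect (exists I, P`_(size P).-1 I != 0)) => // N; case/negP: H; apply/eqP.
  by apply: funext => I; apply/eqP; apply: contraT => H; case: N; exists I.
- move=> I; rewrite /ps_peval prednK ?size_poly_gt0 //.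
  have := congr1 (fun f : PS => f I) HPs; rewrite horner_coef pssumE ps0E => E.
  rewrite -[X in _ = X]E; apply: eq_bigr => j _; by rewrite psmulE psexpE.
Qed.

Lemma poly_of_alg (s : PS) : ps_algebraic k s ->
  exists P : {poly PS}, [/\ P != 0, polyK P & P.[s] = 0].
Proof.
move=> [d [a [Hak [j Hj [I HI]] Hev]]].
exists (\poly_(j < d.+1) a j); split.
- apply/eqP => /(congr1 (fun P : {poly PS} => P`_j)); rewrite coef_poly ltnS Hj coef0 => E.
  by rewrite E ps0E eqxx in HI.
- by move=> i I'; rewrite coef_poly; case: ifP => _; [apply: Hak|apply: (sf0 Hk)].
- apply: funext => I'; rewrite horner_poly pssumE ps0E -[X in _ = X](Hev I') /ps_peval.
  by apply: eq_bigr => i _; rewrite psmulE psexpE.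
Qed.

Lemma fin_alg (s : PS) :
  finite_degree k (gen_field k (fun y => exists I, y = s I)) -> ps_algebraic k s.
Proof.
set L := gen_field k _ => [[u Hu]].
have HL : is_subfield L by apply: gen_is_subfield.
have HkL : forall x, k x -> L x by move=> x; apply: gen_base.
have [w [HwL Hw]] := extract_basis Hk (sf0 HL) (sfB HL)
   (fun a x Ha Hx => sfM HL (HkL a Ha) Hx) Hu.
set m := size w.
have [t0 [Ht0 Hwt0]] : exists t0, (t0 < m)%N /\ w`_t0 != 0.
  case: (pselect (exists t0, (t0 < m)%N /\ w`_t0 != 0)) => // N; exfalso.
  have [c _ E1] := Hw 1 (sf1 HL).
  have E2 : (1 : K) = 0.
    rewrite E1 big1 // => i _.
    case: (eqVneq w`_i 0) => [->|Hi]; first by rewrite mulr0.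
    by case: N; exists i.
  by move/eqP: E2; rewrite oner_eq0.
have Hex : forall It : M * nat, exists c : nat -> K, (forall i, k (c i)) /\
    s It.1 * w`_It.2 = \sum_(i < m) c i * w`_i.
  move=> [I t]; have HL1 : L (s I * w`_t).
    apply: (sfM HL); first by apply: gen_gen; exists I.
    have [Ht|Ht] := ltnP t m; first by apply: HwL; apply: mem_nth.
    by rewrite nth_default //; apply: (sf0 HL).
  by have [c Hc E] := Hw _ HL1; exists c.
have [cf Hcf] := choice Hex.
pose A : 'M[PS]_m := \matrix_(u0, t) (fun I => cf (I, nat_of_ord t) u0).
pose v : 'rV[PS]_m := \row_t psC (w`_t).
have Hv : v *m (s%:M - A) = 0.
  apply/rowP => t; rewrite mulmxBr mul_mx_scalar !mxE.
  apply: funext => I; rewrite pssubE ps0E psmulE ps_mulC -psmulE psC_mul pssumE.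
  apply/eqP; rewrite subr_eq0 mulrC; apply/eqP.
  rewrite (proj2 (Hcf (I, nat_of_ord t))) /=; apply: eq_bigr => i _.
  by rewrite !mxE psC_mul mulrC.
have Hdet : \det (s%:M - A) = 0.
  have := congr1 (fun X => X *m \adj (s%:M - A)) Hv; rewrite -mulmxA mul_mx_adj mul0mx.
  rewrite mul_mx_scalar => /rowP /(_ (Ordinal Ht0)); rewrite !mxE.
  move=> E; apply: funext => I; rewrite ps0E.
  have := congr1 (fun f : PS => f I) E; rewrite ps0E.
  rewrite psmulE ps_mulC -psmulE psC_mul /= => /eqP; rewrite mulf_eq0 (negbTE Hwt0) /=.
  by move/eqP.
apply: (@alg_of_poly s (char_poly A)).
- exact/monic_neq0/char_poly_monic.
- rewrite /char_poly /determinant; apply: polyK_sum => sg _; apply: polyKM.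
    by apply: polyKX_exp; apply/polyKN/polyK1.
  apply: polyK_prod => i _; rewrite /char_poly_mx !mxE; apply: polyKD.
    by apply: polyKMn; apply: polyKX.
  by apply: polyKN; apply: polyKC => I /=; exact: (proj1 (Hcf _)).
- have := det_map_mx (horner_eval s) (char_poly_mx A).
  rewrite -/(char_poly A) /= horner_evalE => <-; rewrite -Hdet; congr (\det _).
  apply/matrixP => i j; rewrite !mxE /= horner_evalE hornerD hornerN hornerC.
  by rewrite hornerMn hornerX.
Qed.

End Main.


Section Final.
Variable K : closedFieldType.
Variable n : nat.
Local Notation M := (mindex n).
Local Notation PS := (pseries K n).
Variable k : K -> Prop.
Hypothesis Hk : is_subfield k.
Hypothesis Hfg : fg_over_perfect k.
Hypothesis Halg : forall x : K, algebraic_over k x.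

Lemma ps_nz (f : PS) : f != 0 -> exists I, f I != 0.
Proof. by move=> /supp_min [J0 [H _]]; exists J0. Qed.

Lemma alg_fin m : forall (s : PS) (P : {poly PS}), (size P <= m)%N -> P != 0 ->
  polyK k P -> P.[s] = 0 -> finite_degree k (gen_field k (fun y => exists I, y = s I)).
Proof.
elim: m => [|m IH] s P Hsz HP0 HPk HPs.
  by move: Hsz; rewrite leqn0 size_poly_eq0 (negbTE HP0).
have [HD|HD] := eqVneq (P^`().[s]) 0; last first.
  have [J0 [HJ0 HsJ0]] := supp_min HD.
  exact: (sep_finite Hk HPk HPs HJ0 HsJ0 Halg).
have [HP'|HP'] := eqVneq P^`() 0; last first.
  apply: (IH s P^`()) => //.
  - by rewrite -ltnS; apply: leq_trans (lt_size_deriv HP0) Hsz.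
  - by move=> i; apply: psK_deriv.
have Hs2 : (1 < size P)%N.
  rewrite ltnNge; apply/negP => Hs.
  have [c Ec] : exists c, P = c%:P by exists P`_0; apply/size1_polyC.
  by move: HP0 HPs; rewrite Ec hornerC polyC_eq0 => H1 H2; rewrite H2 eqxx in H1.
set N := (size P).-1.
have HN : (0 < N)%N by rewrite /N; move: Hs2; case: (size P) => // [] [].
have HsN : size P = N.+1 by rewrite /N prednK // ltnW.
have Hlead : P`_N != 0 by rewrite /N -lead_coefE lead_coef_eq0.
have Hnat : forall i, P`_i.+1 != 0 -> (i.+1)%:R == 0 :> K.
  move=> i Hi; have [I HI] := ps_nz Hi.
  have := congr1 (fun f : PS => f I) (coef_deriv P i); rewrite HP' coef0 ps0E psMnE.
  by move/esym/eqP; rewrite -(mulr_natr (P`_i.+1 I)) mulf_eq0 (negbTE HI).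
have [p Hp] : exists p, p \in [pchar K].
  apply: (natf0_pchar HN); move: (Hnat N.-1); rewrite prednK //; exact.
have Hdiv : forall i, P`_i != 0 -> (p %| i)%N.
  by case=> [|i] Hi; [rewrite dvdn0|rewrite (dvdn_pcharf Hp); apply: Hnat].
have Hp2 : (1 < p)%N by rewrite prime_gt1 // (pcharf_prime Hp).
have Hp0 : (0 < p)%N by apply: ltnW.
pose Q : {poly PS} := \poly_(j < (N %/ p).+1) P`_(j * p).
have HPQ : P = Q \Po 'X^p.
  apply/polyP => i; rewrite coef_comp_poly_Xn //.
  case: (boolP (p %| i)%N) => Hpi; last first.
    by apply/eqP; apply: contraNT Hpi; apply: Hdiv.
  rewrite coef_poly divnK //; case: ltnP => // Hi.
  rewrite nth_default // HsN.
  apply: leq_trans (ltn_ceil N Hp0) _.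
  by rewrite -(divnK Hpi) leq_mul2r Hi orbT.
have HQs : Q.[s ^+ p] = 0 by rewrite -HPs HPQ horner_comp hornerXn.
have HQ0 : Q != 0.
  apply/eqP => /(congr1 (fun R : {poly PS} => R`_(N %/ p))).
  rewrite coef_poly ltnSn divnK ?coef0 => [E|]; last exact: Hdiv.
  by rewrite E eqxx in Hlead.
have HQk : polyK k Q.
  by move=> i; rewrite coef_poly; case: ifP => _; [apply: HPk|apply: (psK0 Hk)].
have HQsz : (size Q <= m)%N.
  apply: leq_trans (size_poly _ _) _.
  have := ltn_Pdiv Hp2 HN; move: Hsz; rewrite HsN ltnS; lia.
have := IH (s ^+ p) Q HQsz HQ0 HQk HQs.
exact: (insep_finite Hp Hk Hfg Halg).
Qed.

End Final.

Unset Implicit Arguments.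

Theorem corollary3p3 (kbar : closedFieldType) (k : kbar -> Prop) (n : nat)
    (sigma : pseries kbar n) :
  is_subfield k -> fg_over_perfect k ->
  (forall x : kbar, algebraic_over k x) ->
  ps_algebraic k sigma <->
  finite_degree k (gen_field k (fun y => exists I, y = sigma I)).
Proof.
move=> Hk Hfg Halg; split.
  move/(poly_of_alg Hk) => [P [HP0 HPk HPs]].
  exact: (alg_fin Hk Hfg Halg (leqnn (size P)) HP0 HPk HPs).
exact: fin_alg.
Qed.
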